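(* Let $F$ be a finite extension of $\mathbb{Q}_p$ with ring of integers $\mathcal{O}_F$ and uniformiser $\pi$, let $n\ge1$, $m\ge1$, $G=\mathrm{GL}_n(F)$, $G_m=1+\pi^mM_n(\mathcal{O}_F)$ and $G^m=\det^{-1}(1+\pi^m\mathcal{O}_F)\subset G$. Then the normal closure of $G_m$ in $G$ (the smallest normal subgroup of $G$ containing $G_m$) is $G^m$. *)

(* Defs.v *)
From mathcomp Require Import all_boot all_algebra.
Set Implicit Arguments. Unset Strict Implicit. Unset Printing Implicit Defensive.
Import GRing.Theory.
Local Open Scope ring_scope.

(* A "finite extension of Q_p", presented intrinsically as a complete
   discretely valued field of characteristic 0 whose residue field is finite
   of characteristic p.  [O] is the ring of integers (as a predicate on F)
   and [pi] a uniformiser. *)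
Definition is_p_adic_field (p : nat) (F : fieldType) (O : F -> Prop) (pi : F)
  : Prop :=
  prime p /\
      [/\ O 0, O 1, (forall x y, O x -> O y -> O (x - y))
        & (forall x y, O x -> O y -> O (x * y))] /\
      [/\ O pi, pi != 0 & ~ O pi^-1] /\
      (forall x : F, x != 0 ->
         exists (u : F) (k : int), [/\ O u, O u^-1 & x = u * pi ^ k]) /\
      (forall k : nat, (k.+1)%:R != 0 :> F) /\
      (* residue characteristic p *)
      (exists a, O a /\ p%:R = pi * a) /\
      (* the residue field O / pi O is finite *)
      (exists s : seq F, (forall y, y \in s -> O y) /\
         forall x, O x -> exists2 y, y \in s & exists z, O z /\ x - y = pi * z) /\
      (* O is complete for the pi-adic topology *)
      (forall u : nat -> F, (forall j, O (u j)) ->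
         (forall k : nat, exists N, forall i j, (N <= i)%N -> (N <= j)%N ->
             exists z, O z /\ u i - u j = pi ^+ k * z) ->
         exists2 l, O l & forall k : nat, exists N, forall i, (N <= i)%N ->
             exists z, O z /\ u i - l = pi ^+ k * z).

Definition congr_sub (F : fieldType) (O : F -> Prop) (pi : F) (n m : nat)
  (A : 'M[F]_n) : Prop :=
  exists B : 'M[F]_n, (forall i j, O (B i j)) /\ A = 1%:M + pi ^+ m *: B.

Definition det_congr_sub (F : fieldType) (O : F -> Prop) (pi : F) (n m : nat)
  (A : 'M[F]_n) : Prop :=
  A \in unitmx /\ exists a, O a /\ \det A = 1 + pi ^+ m * a.

Definition mx_normal_subgroup (F : fieldType) (n : nat) (H : 'M[F]_n -> Prop)
  : Prop :=
  [/\ (forall A, H A -> A \in unitmx),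
      H 1%:M,
      (forall A B, H A -> H B -> H (A *m B)),
      (forall A, H A -> H (invmx A))
    & (forall g A, g \in unitmx -> H A -> H (g *m A *m invmx g))].

Definition normal_closure (F : fieldType) (n : nat) (S : 'M[F]_n -> Prop)
  (A : 'M[F]_n) : Prop :=
  forall H, mx_normal_subgroup H -> (forall B, S B -> H B) -> H A.

(* Main.v *)
Require Import Defs.
From mathcomp Require Import all_boot all_algebra.
From mathcomp Require Import fingroup perm ring.
Set Implicit Arguments. Unset Strict Implicit. Unset Printing Implicit Defensive.
Import GRing.Theory.
Local Open Scope ring_scope.


Definition transv (F : fieldType) n (i j : 'I_n) (t : F) : 'M[F]_n :=
  1%:M + t *: delta_mx i j.

Lemma transvE (F : fieldType) n (i j : 'I_n) (t : F) (B : 'M[F]_n) r c :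
  (transv i j t *m B) r c = B r c + (r == i)%:R * t * B j c.
Proof.
rewrite /transv mulmxDl mul1mx -scalemxAl !mxE; congr (_ + _).
rewrite (bigD1 j) //= big1 ?addr0; last first.
  by move=> l /negPf hl; rewrite mxE hl andbF mul0r.
by rewrite mxE eqxx andbT mulrA [t * _]mulrC.
Qed.

Lemma det_diag1 (F : fieldType) n (l : 'I_n) (d : F) :
  \det (1%:M + (d - 1) *: delta_mx l l : 'M[F]_n) = d.
Proof.
rewrite det_trig; last first.
  apply/is_trig_mxP => i j hij; rewrite !mxE.
  have hne : i != j by rewrite neq_ltn hij.
  rewrite (negPf hne) add0r.
  case: (eqVneq i l) => [ei|ni]; last by rewrite andFb mulr0.
  case: (eqVneq j l) => [ej|nj]; last by rewrite andbF mulr0.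
  by move: hne; rewrite ei ej eqxx.
rewrite (bigD1 l) //= big1 ?mulr1; last by move=> i /negPf hi; rewrite !mxE eqxx hi /= mulr0 addr0.
by rewrite !mxE !eqxx /= mulr1 addrC subrK.
Qed.

Lemma det_transv (F : fieldType) n (i j : 'I_n) (t : F) : i != j ->
  \det (transv i j t) = 1.
Proof.
move=> hij.
have diag1 : forall k, transv i j t k k = 1.
  by move=> k; rewrite !mxE eqxx /=; case: eqP => [->|]; rewrite ?(negPf hij) ?andbF /= ?mulr0 ?addr0 //; rewrite andbF mulr0 addr0.
case: (ltngtP i j) => h.
- rewrite -det_tr det_trig; last first.
    apply/is_trig_mxP => a b hab; rewrite !mxE.
    have -> : (b == a) = false by apply/negbTE; rewrite neq_ltn hab orbT.
    case: eqP => [ea|]; last by rewrite mulr0 addr0.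
    case: eqP => [eb|]; last by rewrite andbF mulr0 addr0.
    by subst; rewrite ltnNge ltnW in hab.
  by rewrite big1 // => k _; rewrite mxE diag1.
- rewrite det_trig; last first.
    apply/is_trig_mxP => a b hab; rewrite !mxE.
    have -> : (a == b) = false by apply/negbTE; rewrite neq_ltn hab.
    case: eqP => [ea|]; last by rewrite mulr0 addr0.
    case: eqP => [eb|]; last by rewrite andbF mulr0 addr0.
    by subst; rewrite ltnNge ltnW in hab.
  by rewrite big1 // => k _; rewrite diag1.
- by move/val_inj: h hij => ->; rewrite eqxx.
Qed.

Lemma natr_false (R : pzSemiRingType) : (false%:R : R) = 0. Proof. by []. Qed.
Lemma natr_true (R : pzSemiRingType) : (true%:R : R) = 1. Proof. by []. Qed.


Definition Pgood (F : fieldType) n (P : 'M[F]_n -> Prop) :=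
  [/\ P 1%:M, (forall A B, P A -> P B -> P (A *m B)),
      (forall i j t, i != j -> P (transv i j t)) & (forall A, P A -> A \in unitmx)].

Lemma clear_col (F : fieldType) n (P : 'M[F]_n -> Prop) : Pgood P ->
  forall (k : 'I_n) (s : seq 'I_n) (B : 'M[F]_n), B k k != 0 ->
  exists T, [/\ P T, (forall r c, B k c = 0 -> (T *m B) r c = B r c),
    (forall c, (T *m B) k c = B k c) &
    (forall r, r \in s -> r != k -> (T *m B) r k = 0)].
Proof.
case=> P1 PM PT _ k s B hB; elim: s => [|i s [T [PT' h1 h2 h3]]].
  by exists 1%:M; split => //; rewrite mul1mx.
case: (eqVneq i k) => [eik|nik].
  exists T; split => // r; rewrite inE => /orP [/eqP -> |]; first by rewrite eik eqxx.
  exact: h3.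
exists (transv i k (- ((T *m B) i k / B k k)) *m T); split.
- exact: PM (PT _ _ _ nik) PT'.
- by move=> r c hc; rewrite -mulmxA transvE h2 hc mulr0 addr0 h1.
- move=> c; rewrite -mulmxA transvE h2 eq_sym (negPf nik) mul0r mul0r addr0 //.
- move=> r; rewrite inE -mulmxA transvE h2 => /orP [/eqP -> _|rs rk].
    by rewrite eqxx mul1r mulNr divfK // subrr.
  case: (eqVneq r i) => [->|ri]; last by rewrite (h3 r) // add0r; apply/eqP; rewrite !mulf_eq0 eqxx.
  by rewrite (_ : true%:R = 1 :> F) // mul1r mulNr divfK // subrr.
Qed.


Definition inv_k (F : fieldType) n (k : nat) (B : 'M[F]_n) :=
  forall i j : 'I_n, (j < k)%N -> B i j = (i == j)%:R.

Lemma find_pivot (F : fieldType) n (B : 'M[F]_n) (k : 'I_n) :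
  B \in unitmx -> inv_k k B -> exists2 i : 'I_n, (k <= i)%N & B i k != 0.
Proof.
move=> uB hk.
have [i /andP[hi hB]|none] := pickP [pred i : 'I_n | (k <= i)%N && (B i k != 0)].
  by exists i.
pose v : 'cV[F]_n := \col_j ((j == k)%:R - (j < k)%:R * B j k).
have Bv : B *m v = 0.
  apply/matrixP => r c; rewrite !mxE.
  under eq_bigr do rewrite mxE mulrBr.
  rewrite sumrB (bigD1 k) //= big1 ?addr0; last first.
    by move=> j /negPf ->; rewrite mulr0.
  rewrite eqxx mulr1.
  rewrite (eq_bigr (fun j : 'I_n => (r == j)%:R * (j < k)%:R * B j k)); last first.
    move=> j _; case: (ltnP j k) => hj; last by rewrite natr_false !(mulr0, mul0r).
    by rewrite hk // natr_true mulrA.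
  rewrite (bigD1 r) //= big1 ?addr0; last first.
    by move=> j /negPf; rewrite eq_sym => ->; rewrite !mul0r.
  rewrite eqxx mul1r; case: (ltnP r k) => hr; first by rewrite mul1r subrr.
  move: (none r) => /= /negbT; rewrite negb_and hr /= negbK => /eqP ->.
  by rewrite mul0r subrr.
have : v = 0 by rewrite -(mulKmx uB v) Bv mulmx0.
move/matrixP => /(_ k 0); rewrite !mxE eqxx ltnn mul0r subr0 => /eqP.
by rewrite oner_eq0.
Qed.

Lemma inv_transv (F : fieldType) n k (B : 'M[F]_n) (i j : 'I_n) t :
  (k <= j)%N -> inv_k k B -> inv_k k (transv i j t *m B).
Proof.
move=> hj hB r c hc; rewrite transvE (hB r c hc) (hB j c hc).
have -> : (j == c) = false by apply/negbTE; rewrite neq_ltn (leq_trans hc hj) orbT.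
by rewrite natr_false mulr0 addr0.
Qed.

Lemma elim_step (F : fieldType) n (P : 'M[F]_n -> Prop) : Pgood P ->
  forall (k r : 'I_n), val r = k.+1 -> forall B, B \in unitmx -> inv_k k B ->
  exists T, P T /\ inv_k k.+1 (T *m B).
Proof.
move=> PG; have [P1 PM PT PU] := PG.
move=> k r hr B uB hB.
have [i hi hiB] := find_pivot uB hB.
have [T1 [PT1 h1 p1]] : exists T1, [/\ P T1, inv_k k (T1 *m B) & (T1 *m B) k k != 0].
  case: (eqVneq (B k k) 0) => hkk; last by exists 1%:M; rewrite mul1mx.
  have nki : k != i by apply/eqP => e; move: hiB; rewrite -e hkk eqxx.
  exists (transv k i 1); split; first exact: PT.
    exact: inv_transv.
  by rewrite transvE hkk eqxx natr_true add0r !mul1r.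
set B1 := T1 *m B in h1 p1.
have nrk : r != k by apply/eqP => e; move: hr; rewrite e => /eqP; rewrite ltn_eqF.
pose T2 := transv r k ((1 - B1 r k) / B1 k k).
set B2 := T2 *m B1.
have h2 : inv_k k B2 by exact: inv_transv.
have e2 : B2 r k = 1 by rewrite /B2 transvE eqxx natr_true mul1r divfK // addrC subrK.
have e2' : B2 k k = B1 k k by rewrite /B2 transvE eq_sym (negPf nrk) natr_false mul0r mul0r addr0.
pose T3 := transv k r (1 - B2 k k).
set B3 := T3 *m B2.
have h3 : inv_k k B3 by apply: inv_transv => //; rewrite hr.
have e3 : B3 k k = 1 by rewrite /B3 transvE eqxx natr_true mul1r e2 mulr1 addrC subrK.
have nz3 : B3 k k != 0 by rewrite e3 oner_eq0.
have [T4 [PT4 h4a h4b h4c]] := @clear_col _ _ _ PG k (enum 'I_n) B3 nz3.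

exists (T4 *m T3 *m T2 *m T1); split.
  have nkr : k != r by rewrite eq_sym.
  exact: (PM _ _ (PM _ _ (PM _ _ PT4 (PT k r _ nkr)) (PT r k _ nrk)) PT1).
have -> : T4 *m T3 *m T2 *m T1 *m B = T4 *m B3 by rewrite /B3 /B2 /B1 !mulmxA.
move=> a c; rewrite ltnS leq_eqVlt => /orP [/eqP ec|hc].
  have -> : c = k by apply: val_inj.
  case: (eqVneq a k) => [->|ak]; first by rewrite h4b e3.
  by rewrite h4c ?mem_enum.
rewrite h4a ?h3 //.

have -> : (k == c) = false by apply/negbTE; rewrite neq_ltn hc orbT.
by rewrite natr_false.
Qed.

Lemma elim_all (F : fieldType) n' (P : 'M[F]_n'.+1 -> Prop) : Pgood P ->
  forall A, A \in unitmx -> exists T, P T /\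
    exists d, T *m A = 1%:M + (d - 1) *: delta_mx ord_max ord_max.
Proof.
move=> PG; have [P1 PM PT PU] := PG; move=> A uA.
have H : forall k, (k <= n')%N -> exists T, P T /\ inv_k k (T *m A).
  elim => [|k IH] hk.
    by exists 1%:M; split => // i j.
  have [T [PTT hT]] := IH (ltnW hk).
  have uB : T *m A \in unitmx by rewrite unitmx_mul PU.
  have [T' [PT' hT']] := @elim_step _ _ _ PG (Ordinal (ltnW hk : (k < n'.+1)%N)) (Ordinal (hk : (k.+1 < n'.+1)%N)) erefl _ uB hT.
  by exists (T' *m T); split; [exact: PM | rewrite -mulmxA].
have [T [PTT hT]] := H n' (leqnn _).
set B := T *m A in hT *.
have uB : B \in unitmx by rewrite unitmx_mul PU.
have [i hi hiB] := @find_pivot _ _ B ord_max uB hT.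
have ei : i = ord_max by apply: val_inj; apply/eqP; rewrite eqn_leq hi -ltnS ltn_ord.
rewrite ei in hiB.
have [T2 [PT2 h2a h2b h2c]] := @clear_col _ _ _ PG ord_max (enum 'I_n'.+1) B hiB.
exists (T2 *m T); split; first exact: PM.
exists (B ord_max ord_max); rewrite -mulmxA -/B.
apply/matrixP => a c.
have -> : (1%:M + (B ord_max ord_max - 1) *: delta_mx ord_max ord_max) a c =
   (a == c)%:R + (B ord_max ord_max - 1) * ((a == ord_max) && (c == ord_max))%:R.
  by rewrite !mxE.
case: (eqVneq c ord_max) => [->|nc].
  case: (eqVneq a ord_max) => [->|na].
    by rewrite h2b natr_true mulr1 addrC subrK.
  by rewrite h2c ?mem_enum // natr_false mulr0 addr0.
have hc : (c < n')%N by rewrite ltn_neqAle -ltnS ltn_ord andbT; apply: contra nc => /eqP e; apply/eqP; apply: val_inj.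
rewrite andbF natr_false mulr0 addr0 h2a ?hT //.
by rewrite eq_sym (negPf nc) natr_false.
Qed.


Definition subring_O (F : fieldType) (O : F -> Prop) :=
  [/\ O 0, O 1, (forall x y, O x -> O y -> O (x - y))
        & (forall x y, O x -> O y -> O (x * y))].

Lemma O_opp (F : fieldType) (O : F -> Prop) : subring_O O -> forall x, O x -> O (- x).
Proof. by case=> O0 _ OB _ x Ox; rewrite -sub0r; apply: OB. Qed.

Lemma O_add (F : fieldType) (O : F -> Prop) : subring_O O -> forall x y, O x -> O y -> O (x + y).
Proof. move=> SO x y Ox Oy; have Ony := O_opp SO Oy; rewrite -(opprK y); case: SO => _ _ OB _; exact: OB. Qed.

Lemma O_exp (F : fieldType) (O : F -> Prop) : subring_O O -> forall x k, O x -> O (x ^+ k).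
Proof. case=> _ O1 _ OM x k Ox; elim: k => [|k IH]; first by rewrite expr0. by rewrite exprS; apply: (OM). Qed.

Lemma O_nat (F : fieldType) (O : F -> Prop) : subring_O O -> forall b : bool, O b%:R.
Proof. by case=> O0 O1 _ _ [] /=. Qed.

Lemma O_sign (F : fieldType) (O : F -> Prop) : subring_O O -> forall k : nat, O ((-1) ^+ k).
Proof. move=> SO k; apply: O_exp => //; apply: O_opp => //; by case: SO. Qed.


Lemma det_congr (F : fieldType) (O : F -> Prop) (c : F) n :
  subring_O O -> O c -> forall B : 'M[F]_n, (forall i j, O (B i j)) ->
  exists a, O a /\ \det (1%:M + c *: B) = 1 + c * a.
Proof.
move=> SO Oc B OB; have [O0 O1 OBm OM] := SO.
set M := 1%:M + c *: B.
have ME : forall i j, M i j = (i == j)%:R + c * B i j by move=> i j; rewrite !mxE.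
have OMe : forall i j, O (M i j).
  by move=> i j; rewrite ME; apply: O_add => //; [apply: O_nat | apply: (OM)].
pose Q x := exists a, O a /\ x = c * a.
suff : Q (\det M - 1) by case=> a [Oa e]; exists a; split => //; rewrite -e addrC subrK.
have e1 : 1 = \sum_(s : 'S_n) (s == 1%g)%:R :> F.
  by rewrite (bigD1 1%g) //= eqxx big1 ?addr0 // => s /negPf ->.
rewrite {1}e1 /determinant -sumrB; apply: big_ind.
- by exists 0; rewrite mulr0.
- move=> x y [a [Oa ->]] [b [Ob ->]]; exists (a + b); split; first exact: O_add.
  by rewrite mulrDr.
move=> s _; case: (eqVneq s 1%g) => [->|ns].
  rewrite odd_perm1 expr0 mul1r natr_true.
  have [a [Oa ->]] : exists a, O a /\ \prod_i M i ((1%g : 'S_n) i) = 1 + c * a.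
    apply: (big_ind (fun x => exists a, O a /\ x = 1 + c * a)).
    - by exists 0; rewrite mulr0 addr0.
    - move=> x y [a [Oa ->]] [b [Ob ->]]; exists (a + b + c * a * b); split.
        by apply: O_add => //; [apply: O_add | apply: (OM) => //; apply: (OM)].
      by rewrite mulrDr mulrDl !mulrDr mul1r mulr1 !addrA -!mulrA mulrDl mul1r -addrA -mulrA [a * (c * b)]mulrCA.
    - by move=> i _; rewrite perm1 ME eqxx natr_true; exists (B i i).
  by exists a; split => //; rewrite [1 + _]addrC addrK.
have [i hi|none] := pickP (fun i => s i != i); last first.
  case/eqP: ns; apply/permP => i; rewrite perm1.
  by move: (none i) => /= /negbFE /eqP.
rewrite natr_false subr0 (bigD1 i) //= ME.
have -> : (i == s i) = false by rewrite eq_sym; apply/negbTE.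
exists ((-1) ^+ s * B i (s i) * \prod_(j | j != i) M j (s j)); split; last first.
  by rewrite natr_false add0r -[c * _ * _]mulrA mulrCA [(-1) ^+ _ * (_ * _)]mulrA.
apply OM; [apply OM; [exact: O_sign | exact: (OB)] |].
by apply: big_ind => // j _; exact: OMe.
Qed.


Lemma one_plus_neq0 (F : fieldType) (O : F -> Prop) pi m a :
  subring_O O -> O pi -> ~ O pi^-1 -> pi != 0 -> (0 < m)%N -> O a ->
  1 + pi ^+ m * a != 0.
Proof.
move=> SO Opi npi pi0; case: m => // m' _ Oa; apply/eqP => e; apply: npi.
have e' : pi ^+ m'.+1 * a = -1 by apply/eqP; rewrite -addr_eq0 addrC e.
have -> : pi^-1 = - (pi ^+ m' * a).
  by rewrite -[pi^-1]mulr1 -[1]opprK -e' exprS -mulrA mulrN mulKf.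
have [_ _ _ OM] := SO; apply: (O_opp SO); apply: OM => //; exact: O_exp.
Qed.

Lemma inv_one_plus (F : fieldType) (O : F -> Prop) pi m a :
  subring_O O -> O pi -> ~ O pi^-1 -> pi != 0 ->
  (forall x : F, x != 0 ->
         exists (u : F) (k : int), [/\ O u, O u^-1 & x = u * pi ^ k]) ->
  (0 < m)%N -> O a -> O ((1 + pi ^+ m * a)^-1).
Proof.
move=> SO Opi npi pi0 val hm Oa.
have [O0 O1 OB OM] := SO.
have hx := one_plus_neq0 SO Opi npi pi0 hm Oa.
have [u [k [Ou Oui ex]]] := val _ hx.
case: k ex => [[|k0]|k0] ex.
- by rewrite ex expr0z mulr1.
- exfalso; apply: npi; case: m hm hx ex => // m' _ hx ex.
  have ex' : 1 + pi ^+ m'.+1 * a = u * pi ^+ k0.+1 by exact: ex.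
  have e1 : 1 = pi * (u * pi ^+ k0 - pi ^+ m' * a).
    by rewrite mulrBr -(addrK (pi ^+ m'.+1 * a) 1) ex' !exprS mulrCA !mulrA.
  have -> : pi^-1 = u * pi ^+ k0 - pi ^+ m' * a by rewrite -[pi^-1]mulr1 [X in _ * X]e1 mulKf.
  by apply: OB; apply: OM => //; apply: O_exp.
- exfalso; apply: npi.
  have ex' : 1 + pi ^+ m * a = u * (pi ^+ k0.+1)^-1 by exact: ex.
  have u0 : u != 0 by apply: contraNneq hx => u0; rewrite ex' u0 mul0r.
  have -> : pi^-1 = u^-1 * (1 + pi ^+ m * a) * pi ^+ k0.
    by rewrite ex' mulKf // exprSr invfM mulrAC mulVf ?mul1r // expf_neq0.
  apply: (OM); [apply: (OM) => //; apply: (O_add SO) => //; apply: (OM) => //|]; exact: (O_exp SO).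
Qed.


Lemma conj_transv (F : fieldType) n (i j : 'I_n) (c t : F) : i != j -> c != 0 ->
  let g := 1%:M + (t / c - 1) *: delta_mx i i in
  g *m transv i j c = transv i j t *m g.
Proof.
move=> nij c0 g; rewrite /g /transv.
rewrite !mulmxDl !mulmxDr !mul1mx !mulmx1 -!scalemxAl -!scalemxAr.
have nji : j != i by rewrite eq_sym.
rewrite mul_delta_mx (@mul_delta_mx_0 _ n n n j i i i nji) !scaler0 addr0.
apply/matrixP => a b; rewrite !mxE.
case: (a == i); case: (b == j); case: (b == i);
  rewrite ?natr_true ?natr_false /= ?mulr0 ?mulr1 ?addr0 ?natr_true ?natr_false ?mulr0 ?mulr1 ?addr0 //.
all: rewrite ?mulrBl ?divfK // ?mul1r; ring.
Qed.

Unset Implicit Arguments.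
Theorem lemma6p18 (p : nat) (F : fieldType) (O : F -> Prop) (pi : F)
  (n m : nat) :
  is_p_adic_field p O pi -> (0 < n)%N -> (0 < m)%N ->
  forall A : 'M[F]_n,
    normal_closure (congr_sub O pi m) A <-> det_congr_sub O pi m A.
Proof.
move=> [_ [SO [[Opi pi0 npi] [val _]]]] hn hm A.
have [O0 O1 OB OM] := SO.
have Oc : O (pi ^+ m) := O_exp SO m Opi.
have c0 : pi ^+ m != 0 := expf_neq0 m pi0.
split.
- move=> hA; apply: hA.
    split.
    + by move=> X [].
    + by split; [exact: unitmx1 | exists 0; split => //; rewrite det1 mulr0 addr0].
    + move=> X Y [uX [a [Oa dX]]] [uY [b [Ob dY]]]; split; first by rewrite unitmx_mul uX.
      exists (a + b + pi ^+ m * a * b); split.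
        by apply: (O_add SO); [apply: (O_add SO) | apply: (OM) => //; apply: (OM)].
      by rewrite det_mulmx dX dY; ring.
    + move=> X [uX [a [Oa dX]]]; split; first by rewrite unitmx_inv.
      have hx := one_plus_neq0 SO Opi npi pi0 hm Oa.
      exists (- (a * (1 + pi ^+ m * a)^-1)); split.
        by apply: (O_opp SO); apply: (OM) => //; exact: inv_one_plus.
      rewrite det_inv dX; set x := 1 + pi ^+ m * a.
      have cax : pi ^+ m * a = x - 1 by rewrite /x addrC addKr.
      by rewrite mulrN mulrA cax mulrBl mulfV // mul1r opprB addrC subrK.
    + move=> g X ug [uX [a [Oa dX]]]; split.
        by rewrite !unitmx_mul ug uX unitmx_inv ug.
      exists a; split => //; rewrite !det_mulmx det_inv mulrAC mulfV ?mul1r //.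
      by rewrite -unitfE -unitmxE.
  move=> X [Bm [OBm ->]]; have [a [Oa da]] := det_congr SO Oc OBm.
  split; last by exists a.
  by rewrite unitmxE da unitfE; exact: (one_plus_neq0 SO Opi npi pi0 hm Oa).
- move=> [uA [a [Oa dA]]] H HN HS; have [HU H1 HM HI HC] := HN.
  case: n hn A uA dA H HN HS HU H1 HM HI HC => // n' _ A uA dA H HN HS HU H1 HM HI HC.
  pose P := fun T : 'M[F]_n'.+1 => H T /\ \det T = 1.
  have PG : Pgood P.
    split.
    - by split => //; rewrite det1.
    - move=> X Y [hX dX] [hY dY]; split; [exact: HM | by rewrite det_mulmx dX dY mulr1].
    - move=> i j t nij; split; last exact: det_transv.
      case: (eqVneq t 0) => [->|t0].
        by rewrite /transv scale0r addr0.
      pose g : 'M[F]_n'.+1 := 1%:M + (t / pi ^+ m - 1) *: delta_mx i i.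
      have ug : g \in unitmx.
        by rewrite unitmxE det_diag1 unitfE mulf_neq0 ?invr_eq0.
      have -> : transv i j t = g *m transv i j (pi ^+ m) *m invmx g.
        by rewrite conj_transv // mulmxK.
      apply: (HC) => //; apply: (HS); exists (delta_mx i j); split => //.
      by move=> a' b'; rewrite mxE; exact: O_nat.
    - by move=> X [_ dX]; rewrite unitmxE dX unitr1.
  have [T [[HT dT] [d ed]]] := elim_all PG uA.
  have dd : d = 1 + pi ^+ m * a.
    by rewrite -dA -(@det_diag1 _ n'.+1 ord_max d) -ed det_mulmx dT mul1r.
  have HD : H (1%:M + (d - 1) *: delta_mx ord_max ord_max).
    apply: (HS); exists (a *: delta_mx ord_max ord_max); split.
      by move=> i j; rewrite !mxE; apply: (OM) => //; apply: O_nat.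
    have -> : d - 1 = pi ^+ m * a by rewrite dd addrC addKr.
    by rewrite scalerA.
  have uT : T \in unitmx by rewrite unitmxE dT unitr1.
  by rewrite -(mulKmx uT A) ed; apply: (HM) => //; exact: HI.
Qed.
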